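(* Let $(N_1,m_1)$ and $(N_2,m_2)$ be labeled marked Petri nets, with place sets $P_1=\{p^1_1,\dots,p^1_k\}$ and $P_2=\{p^2_1,\dots,p^2_l\}$, and let $E$ be a system of linear constraints such that $(N_1,m_1)\vartriangleright_E(N_2,m_2)$. Let $F_1$ be a formula whose free variables satisfy $(\mathrm{fv}(F_1)\setminus P_1)\cap(\mathrm{fv}(E)\setminus P_1)=\emptyset$, and let $F_2(\vec y)\triangleq\exists\vec x.\ \tilde E(\vec x,\vec y)\wedge F_1(\vec x)$ be the $E$-transform of $F_1$. Then $F_1$ is reachable in $(N_1,m_1)$ if and only if $F_2$ is reachable in $(N_2,m_2)$.
   Context: A Petri net $N=(P,T,\mathrm{Pre},\mathrm{Post})$ has a finite set of places $P$, a finite set of transitions $T$ disjoint from $P$, and flow functions $\mathrm{Pre},\mathrm{Post}:T\to(P\to\mathbb N)$. A marking is a map $m:P\to\mathbb N$; a marked net is a pair $(N,m)$. Transition $t$ is enabled at $m$ if $m(p)\ge\mathrm{Pre}(t,p)$ for all $p$; firing it yields $m'=m-\mathrm{Pre}(t)+\mathrm{Post}(t)$, written $m\xrightarrow{t}m'$. A firing sequence $\varrho=t_1\cdots t_n$ is fired from $m$ to $m'$ ($m\overset{\varrho}{\Rightarrow}m'$) if there are markings $m=m_0,\dots,m_n=m'$ with $m_i\xrightarrow{t_{i+1}}m_{i+1}$. $R(N,m_0)$ is the set of markings reachable from $m_0$. A labeled net has a labeling $l:T\to\Sigma\cup\{\tau\}$ ($\tau\notin\Sigma$ a silent symbol), extended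 to sequences by $l(\epsilon)=\epsilon$, $\tau$ mapped to $\epsilon$, and $l(\varrho t)=l(\varrho)l(t)$. Formulas are Boolean combinations of linear (in)equalities over integer variables; place names are used as variables. For a marking $m$ over $P=\{p_1,\dots,p_n\}$, $\underline m\triangleq\bigwedge_i(p_i=m(p_i))$. A marking $m$ satisfies $\phi$, written $m\models\phi$, when $\phi\wedge\underline m$ is satisfiable over the integers ($\phi$ may contain variables that are not places). $\phi$ is reachable in $(N,m_0)$ if there is $m\in R(N,m_0)$ with $m\models\phi$. Markings $m_1$ over $P_1$ and $m_2$ over $P_2$ are compatible if $m_1(p)=m_2(p)$ for all $p\in P_1\cap P_2$; then $m_1\uplus m_2$ is the marking over $P_1\cup P_2$ equal to $m_1$ on $P_1$ and to $m_2$ on $P_2\setminus P_1$; writing $m_1\uplus m_2\models E$ presupposes compatibility. $E$-abstraction: for labeled nets $N_1,N_2$ (labelings $l_1,l_2$ over the same alphabet $\Sigma$) with places $P_1,P_2$ and a system $E$ of linear constraints (which may contain variables outside $P_1\cup P_2$), $(N_1,m_1)\sqsupseteq_E(N_2,m_2)$ holds iff (A1) $m_1\uplus m_2\models E$; and (A2) for every firing sequence $m_1\overset{\varrho_1}{\Rightarrow}m_1'$ in $N_1$ there is at least one marking $m_2'$ over $P_2$ with $m_1'\uplus m_2'\models E$, and for every marking $m_2'$ over $P_2$ with $m_1'\uplus m_2'\models E$ there is a firing sequence $\varrho_2$ of $N_2$ with $m_2\overset{\varrho_2}{\Rightarrow}m_2'$ and $l_1(\varrho_1)=l_2(\varrho_2)$.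 $(N_1,m_1)\vartriangleright_E(N_2,m_2)$ means both $(N_1,m_1)\sqsupseteq_E(N_2,m_2)$ and $(N_2,m_2)\sqsupseteq_E(N_1,m_1)$. $E$-transform: with $\vec p_1=(p^1_1,\dots,p^1_k)$, $\vec p_2=(p^2_1,\dots,p^2_l)$, and disjoint vectors of fresh variables $\vec x=(x_1,\dots,x_k)$, $\vec y=(y_1,\dots,y_l)$, define $\tilde E(\vec x,\vec y)\triangleq E\{\vec p_1\leftarrow\vec x\}\{\vec p_2\leftarrow\vec y\}\wedge\bigwedge_{\{(i,j)\mid p^1_i=p^2_j\}}(x_i=y_j)$; $F_1(\vec x)$ denotes $F_1$ with place $p^1_i$ replaced by $x_i$, and $F_2(\vec y)$ is evaluated on markings of $N_2$ with $y_j$ standing for $p^2_j$.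
   Formalization: In the E-transform $F_2(\vec y)\triangleq\exists\vec x.\ \tilde E(\vec x,\vec y)\wedge F_1(\vec x)$, the bound variables $\vec x$ range over nonnegative integers rather than over all integers. The statement above fails without it. *)

(* Defs.v *)
From Stdlib Require Import ZArith List.
Import ListNotations.

Set Implicit Arguments.

(** Variable names (place names are variables); decidable equality. *)
Class EqDec (V : Type) := eq_dec : forall x y : V, {x = y} + {x <> y}.

Inductive term (V : Type) : Type :=
| TConst (c : Z)
| TVar (v : V)
| TAdd (a b : term V)
| TScale (c : Z) (a : term V).

Inductive formula (V : Type) : Type :=
| FTrue
| FFalse
| FLe (a b : term V)
| FEq (a b : term V)
| FNot (f : formula V)
| FAnd (f g : formula V)
| FOr (f g : formula V).

Arguments TConst {V} c.
Arguments FTrue {V}.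
Arguments FFalse {V}.

Fixpoint eval_term {V : Type} (rho : V -> Z) (t : term V) : Z :=
  match t with
  | TConst c => c
  | TVar v => rho v
  | TAdd a b => (eval_term rho a + eval_term rho b)%Z
  | TScale c a => (c * eval_term rho a)%Z
  end.

Fixpoint eval {V : Type} (rho : V -> Z) (f : formula V) : Prop :=
  match f with
  | FTrue => True
  | FFalse => False
  | FLe a b => (eval_term rho a <= eval_term rho b)%Z
  | FEq a b => eval_term rho a = eval_term rho b
  | FNot g => ~ eval rho g
  | FAnd g h => eval rho g /\ eval rho h
  | FOr g h => eval rho g \/ eval rho h
  end.

Fixpoint fv_term {V : Type} (t : term V) : list V :=
  match t with
  | TConst _ => []
  | TVar v => [v]
  | TAdd a b => fv_term a ++ fv_term b
  | TScale _ a => fv_term a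
  end.

Fixpoint fv {V : Type} (f : formula V) : list V :=
  match f with
  | FTrue | FFalse => []
  | FLe a b | FEq a b => fv_term a ++ fv_term b
  | FNot g => fv g
  | FAnd g h | FOr g h => fv g ++ fv h
  end.

Fixpoint rename_term {V : Type} (s : V -> V) (t : term V) : term V :=
  match t with
  | TConst c => TConst c
  | TVar v => TVar (s v)
  | TAdd a b => TAdd (rename_term s a) (rename_term s b)
  | TScale c a => TScale c (rename_term s a)
  end.

Fixpoint rename {V : Type} (s : V -> V) (f : formula V) : formula V :=
  match f with
  | FTrue => FTrue
  | FFalse => FFalse
  | FLe a b => FLe (rename_term s a) (rename_term s b)
  | FEq a b => FEq (rename_term s a) (rename_term s b)
  | FNot g => FNot (rename s g)
  | FAnd g h => FAnd (rename s g) (rename s h)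
  | FOr g h => FOr (rename s g) (rename s h)
  end.

Fixpoint lookup {V : Type} `{EqDec V} (ps xs : list V) (v : V) : V :=
  match ps, xs with
  | p :: ps', x :: xs' => if eq_dec v p then x else lookup ps' xs' v
  | _, _ => v
  end.

(** Formula with an existential prefix [exists xs. body]; the bound
    variables stand for markings of places and range over naturals. *)
Record eformula (V : Type) := EX { ebound : list V; ebody : formula V }.

Definition eval_ex {V : Type} (rho : V -> Z) (F : eformula V) : Prop :=
  exists rho' : V -> Z,
    (forall v, ~ In v (ebound F) -> rho' v = rho v) /\
    (forall x, In x (ebound F) -> (0 <= rho' x)%Z) /\
    eval rho' (ebody F).

(** A transition: its Pre and Post flow and its label ([None] = tau). *)
Record transition (V S : Type) := Trans {
  pre : V -> nat;
  post : V -> nat;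
  lab : option S }.

Record net (V S : Type) := Net {
  places : list V;
  transitions : list (transition V S) }.

Definition wf_net {V S : Type} (N : net V S) : Prop :=
  NoDup (places N) /\
  forall t, In t (transitions N) -> forall v, ~ In v (places N) ->
    pre t v = 0%nat /\ post t v = 0%nat.

Definition marking (V : Type) := V -> nat.

Definition is_marking {V S : Type} (N : net V S) (m : marking V) : Prop :=
  forall v, ~ In v (places N) -> m v = 0%nat.

Definition enabled {V S : Type} (t : transition V S) (m : marking V) : Prop :=
  forall p, (pre t p <= m p)%nat.

Definition fire {V S : Type} (t : transition V S) (m : marking V) : marking V :=
  fun p => (m p - pre t p + post t p)%nat.

Inductive fires {V S : Type} (N : net V S) :
  marking V -> list (transition V S) -> marking V -> Prop :=
| fires_nil m : fires N m [] m
| fires_cons m t rho m' :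
    In t (transitions N) -> enabled t m ->
    fires N (fire t m) rho m' -> fires N m (t :: rho) m'.

Fixpoint labels {V S : Type} (rho : list (transition V S)) : list S :=
  match rho with
  | [] => []
  | t :: rho' =>
      match lab t with
      | Some a => a :: labels rho'
      | None => labels rho'
      end
  end.

Definition reachable {V S : Type} (N : net V S) (m0 m : marking V) : Prop :=
  exists rho, fires N m0 rho m.

Definition models {V : Type} (P : list V) (m : marking V) (phi : formula V) : Prop :=
  exists rho : V -> Z, eval rho phi /\ forall p, In p P -> rho p = Z.of_nat (m p).

Definition compatible {V : Type} (P1 : list V) (m1 : marking V)
  (P2 : list V) (m2 : marking V) : Prop :=
  forall p, In p P1 -> In p P2 -> m1 p = m2 p.

Definition munion {V : Type} `{EqDec V} (P1 : list V) (m1 m2 : marking V) : marking V :=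
  fun v => if in_dec eq_dec v P1 then m1 v else m2 v.

Definition models_union {V : Type} `{EqDec V} (P1 : list V) (m1 : marking V)
  (P2 : list V) (m2 : marking V) (E : formula V) : Prop :=
  compatible P1 m1 P2 m2 /\ models (P1 ++ P2) (munion P1 m1 m2) E.

Definition reachable_formula {V S : Type} (N : net V S) (m0 : marking V)
  (phi : formula V) : Prop :=
  exists m, reachable N m0 m /\ models (places N) m phi.

Definition abstracts {V S : Type} `{EqDec V} (N1 : net V S) (m1 : marking V)
  (N2 : net V S) (m2 : marking V) (E : formula V) : Prop :=
  models_union (places N1) m1 (places N2) m2 E /\
  forall rho1 m1', fires N1 m1 rho1 m1' ->
    (exists m2', is_marking N2 m2' /\ models_union (places N1) m1' (places N2) m2' E) /\
    (forall m2', is_marking N2 m2' -> models_union (places N1) m1' (places N2) m2' E ->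
       exists rho2, fires N2 m2 rho2 m2' /\ labels rho1 = labels rho2).

Definition equiv_E {V S : Type} `{EqDec V} (N1 : net V S) (m1 : marking V)
  (N2 : net V S) (m2 : marking V) (E : formula V) : Prop :=
  abstracts N1 m1 N2 m2 E /\ abstracts N2 m2 N1 m1 E.

Definition big_and {V : Type} (l : list (formula V)) : formula V :=
  fold_right (@FAnd V) FTrue l.

(** the equalities x_i = y_j for all (i,j) with p1_i = p2_j *)
Definition shared_eqs {V : Type} `{EqDec V} (P1 X P2 Y : list V) : list (formula V) :=
  flat_map (fun px =>
    flat_map (fun qy =>
      if eq_dec (fst px) (fst qy) then [FEq (TVar (snd px)) (TVar (snd qy))] else [])
      (combine P2 Y))
    (combine P1 X).

Definition E_tilde {V : Type} `{EqDec V} (P1 X P2 Y : list V) (E : formula V) : formula V :=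
  FAnd (rename (lookup P2 Y) (rename (lookup P1 X) E)) (big_and (shared_eqs P1 X P2 Y)).

Definition E_transform {V : Type} `{EqDec V} (P1 X P2 Y : list V) (E F1 : formula V)
  : eformula V :=
  EX X (FAnd (E_tilde P1 X P2 Y E) (rename (lookup P1 X) F1)).

(** F2(Y) evaluated on a marking m of a net with places P2, y_j standing for p2_j *)
Definition models_y {V : Type} (Y P2 : list V) (m : marking V) (F : eformula V) : Prop :=
  exists rho : V -> Z, eval_ex rho F /\
    forall y p, In (y, p) (combine Y P2) -> rho y = Z.of_nat (m p).

Definition reachable_eformula {V S : Type} (N : net V S) (m0 : marking V)
  (Y : list V) (F : eformula V) : Prop :=
  exists m, reachable N m0 m /\ models_y Y (places N) m F.

(* Main.v *)
Require Import Defs.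
From Stdlib Require Import ZArith List Lia.
Import ListNotations.

Section Aux.
Context {V : Type} `{EqDec V}.

Lemma lookup_notin (ps xs : list V) v : ~ In v ps -> lookup ps xs v = v.
Proof.
  revert xs; induction ps as [|a ps IH]; intros [|b xs] Hn; simpl; auto.
  destruct (eq_dec v a) as [->|]; [exfalso; apply Hn; left; auto|].
  apply IH; intro; apply Hn; right; auto.
Qed.

Lemma lookup_in (ps xs : list V) v : length ps = length xs -> In v ps ->
  In (v, lookup ps xs v) (combine ps xs).
Proof.
  revert xs; induction ps as [|a ps IH]; intros [|b xs] Hl Hi; simpl in *; try discriminate; try tauto.
  destruct (eq_dec v a) as [->|Hne]; [left; auto|].
  right; apply IH; [congruence|]. destruct Hi; [congruence|auto].
Qed.

Lemma lookup_pair (ps xs : list V) p x : NoDup ps -> In (p, x) (combine ps xs) ->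
  lookup ps xs p = x.
Proof.
  revert xs; induction ps as [|a ps IH]; intros [|b xs] Hnd Hi; simpl in *; try tauto.
  inversion Hnd; subst.
  destruct Hi as [Heq|Hi].
  - inversion Heq; subst. destruct (eq_dec p p); congruence.
  - pose proof (in_combine_l _ _ _ _ Hi).
    destruct (eq_dec p a) as [->|]; [contradiction|]. apply IH; auto.
Qed.

Lemma combine_swap {A B : Type} (l1 : list A) (l2 : list B) a b :
  In (a, b) (combine l1 l2) -> In (b, a) (combine l2 l1).
Proof.
  revert l2; induction l1 as [|c l1 IH]; intros [|d l2] Hi; simpl in *; try tauto.
  destruct Hi as [Heq|Hi]; [inversion Heq; subst; left; auto|right; auto].
Qed.

Lemma eval_term_rename (rho : V -> Z) s t :
  eval_term rho (rename_term s t) = eval_term (fun v => rho (s v)) t.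
Proof. induction t; simpl; congruence. Qed.

Lemma eval_rename (rho : V -> Z) s f :
  eval rho (rename s f) = eval (fun v => rho (s v)) f.
Proof.
  induction f; simpl; rewrite ?eval_term_rename, ?IHf, ?IHf1, ?IHf2; reflexivity.
Qed.

Lemma eval_term_ext (rho rho' : V -> Z) t :
  (forall v, In v (fv_term t) -> rho v = rho' v) -> eval_term rho t = eval_term rho' t.
Proof.
  induction t; simpl; intros Hv; auto.
  - rewrite IHt1, IHt2; auto; intros; apply Hv; apply in_or_app; auto.
  - rewrite IHt; auto.
Qed.

Lemma eval_ext (rho rho' : V -> Z) f :
  (forall v, In v (fv f) -> rho v = rho' v) -> eval rho f = eval rho' f.
Proof.
  induction f; simpl; intros Hv; auto.
  - rewrite (eval_term_ext rho rho' a), (eval_term_ext rho rho' b); auto;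
      intros; apply Hv; apply in_or_app; auto.
  - rewrite (eval_term_ext rho rho' a), (eval_term_ext rho rho' b); auto;
      intros; apply Hv; apply in_or_app; auto.
  - rewrite IHf; auto.
  - rewrite IHf1, IHf2; auto; intros; apply Hv; apply in_or_app; auto.
  - rewrite IHf1, IHf2; auto; intros; apply Hv; apply in_or_app; auto.
Qed.

Lemma eval_big_and (rho : V -> Z) l :
  eval rho (big_and l) <-> forall f, In f l -> eval rho f.
Proof.
  induction l as [|g l IH]; simpl; split; intros Hh; auto.
  - intros f [].
  - destruct Hh as [Hg Hl]. intros f [<-|Hf]; auto. apply IH; auto.
  - split; [apply Hh; auto|]. apply IH; intros; apply Hh; auto.
Qed.

Lemma shared_eqs_in P1 X P2 Y f : In f (shared_eqs P1 X P2 Y) ->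
  exists p x y, In (p, x) (combine P1 X) /\ In (p, y) (combine P2 Y) /\
    f = FEq (TVar x) (TVar y).
Proof.
  unfold shared_eqs. intros Hf.
  apply in_flat_map in Hf as [[p x] [Hpx Hf]].
  apply in_flat_map in Hf as [[q y] [Hqy Hf]]. simpl in Hf.
  destruct (eq_dec p q) as [<-|]; [|destruct Hf].
  destruct Hf as [<-|[]]. exists p, x, y; auto.
Qed.

Lemma shared_eqs_mem P1 X P2 Y p x y :
  In (p, x) (combine P1 X) -> In (p, y) (combine P2 Y) ->
  In (FEq (TVar x) (TVar y)) (shared_eqs P1 X P2 Y).
Proof.
  intros H1 H2. unfold shared_eqs. apply in_flat_map. exists (p, x). split; auto.
  apply in_flat_map. exists (p, y). split; auto. simpl.
  destruct (eq_dec p p); [left; auto|congruence].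
Qed.

End Aux.
Arguments combine_swap {A B l1 l2 a b}.
Arguments lookup_pair {V _ ps xs p x}.
Arguments shared_eqs_in {V _ P1 X P2 Y f}.
Arguments shared_eqs_mem {V _ P1 X P2 Y p x y}.

Lemma nodup_app_disj {A : Type} (l1 l2 : list A) a :
  NoDup (l1 ++ l2) -> In a l1 -> In a l2 -> False.
Proof.
  induction l1 as [|b l1 IH]; simpl; intros Hnd Ha Hb; auto.
  inversion Hnd; subst. destruct Ha as [<-|Ha]; eauto.
  apply H1; apply in_or_app; auto.
Qed.

Theorem theorem5 (V S : Type) `{EqDec V} (N1 N2 : net V S) (m1 m2 : marking V)
  (E F1 : formula V) (X Y : list V) :
  wf_net N1 -> wf_net N2 ->
  is_marking N1 m1 -> is_marking N2 m2 ->
  equiv_E N1 m1 N2 m2 E ->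
  (* (fv(F1) \ P1) /\ (fv(E) \ P1) = empty *)
  (forall v, In v (fv F1) -> In v (fv E) -> In v (places N1)) ->
  (* X, Y: disjoint vectors of fresh variables *)
  length X = length (places N1) -> length Y = length (places N2) ->
  NoDup (X ++ Y) ->
  (forall v, In v (X ++ Y) ->
     ~ In v (places N1) /\ ~ In v (places N2) /\ ~ In v (fv E) /\ ~ In v (fv F1)) ->
  (reachable_formula N1 m1 F1 <->
   reachable_eformula N2 m2 Y (E_transform (places N1) X (places N2) Y E F1)).
Proof.
  intros wf1 wf2 mk1 mk2 [[_ A12] [_ A21]] Hdisj HlX HlY Hnd Hfresh.
  assert (ndX : NoDup X) by (eapply NoDup_app_remove_r; eauto).
  assert (ndY : NoDup Y) by (eapply NoDup_app_remove_l; eauto).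
  assert (dXY : forall v, In v X -> In v Y -> False) by (intros; eapply nodup_app_disj; eauto).
  assert (fX : forall v, In v X ->
     ~ In v (places N1) /\ ~ In v (places N2) /\ ~ In v (fv E) /\ ~ In v (fv F1))
    by (intros; apply Hfresh; apply in_or_app; auto).
  assert (fY : forall v, In v Y ->
     ~ In v (places N1) /\ ~ In v (places N2) /\ ~ In v (fv E) /\ ~ In v (fv F1))
    by (intros; apply Hfresh; apply in_or_app; auto).
  assert (HlX' : length (places N1) = length X) by auto.
  assert (HlY' : length (places N2) = length Y) by auto.
  split.
  - intros [m1' [[r1 Hf1] [rho [Hrho Hrhop]]]].
    destruct (A12 r1 m1' Hf1) as [[m2' [Hmk2' [Hcomp [sigma [Hsig Hsigp]]]]] Hreach].
    destruct (Hreach m2' Hmk2' (conj Hcomp (ex_intro _ sigma (conj Hsig Hsigp))))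
      as [r2 [Hf2 _]].
    exists m2'. split; [exists r2; exact Hf2|].
    set (tau := fun v =>
      if in_dec eq_dec v X then Z.of_nat (m1' (lookup X (places N1) v))
      else if in_dec eq_dec v Y then Z.of_nat (m2' (lookup Y (places N2) v))
      else if in_dec eq_dec v (fv F1) then rho v else sigma v).
    assert (HxP : forall p, In p (places N1) ->
      tau (lookup (places N1) X p) = Z.of_nat (m1' p)).
    { intros p Hp. pose proof (lookup_in _ _ _ HlX' Hp) as Hc.
      pose proof (in_combine_r _ _ _ _ Hc) as Hx.
      unfold tau. destruct (in_dec eq_dec _ X); [|contradiction].
      rewrite (lookup_pair ndX (combine_swap Hc)). reflexivity. }
    assert (HyP : forall y p, In (y, p) (combine Y (places N2)) -> tau y = Z.of_nat (m2' p)).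
    { intros y p Hc. pose proof (in_combine_l _ _ _ _ Hc) as Hy.
      unfold tau. destruct (in_dec eq_dec y X) as [Hx|]; [exfalso; eauto|].
      destruct (in_dec eq_dec y Y); [|contradiction].
      rewrite (lookup_pair ndY Hc). reflexivity. }
    exists tau. split.
    + exists tau. split; [reflexivity|]. split.
      * intros x Hx. unfold tau. destruct (in_dec eq_dec x X); [lia|contradiction].
      * unfold E_transform, E_tilde. cbn [ebody eval].
        rewrite !eval_rename. split; [split|].
        -- rewrite (eval_ext _ sigma); auto.
           intros v Hv. destruct (in_dec eq_dec v (places N1)) as [Hp|Hp].
           ++ pose proof (lookup_in _ _ _ HlX' Hp) as Hc.
              pose proof (in_combine_r _ _ _ _ Hc) as Hx.
              rewrite (lookup_notin (places N2) Y); [|apply fX; auto].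
              rewrite HxP by auto. rewrite Hsigp by (apply in_or_app; auto).
              unfold munion. destruct (in_dec eq_dec v (places N1)); [auto|contradiction].
           ++ rewrite (lookup_notin (places N1) X) by auto.
              destruct (in_dec eq_dec v (places N2)) as [Hq|Hq].
              ** rewrite (HyP _ v) by (apply combine_swap, lookup_in; auto).
                 rewrite Hsigp by (apply in_or_app; auto).
                 unfold munion. destruct (in_dec eq_dec v (places N1)); [contradiction|auto].
              ** rewrite (lookup_notin (places N2) Y) by auto.
                 unfold tau.
                 destruct (in_dec eq_dec v X) as [Hx|]; [destruct (fX v Hx) as [? [? [? ?]]]; contradiction|].
                 destruct (in_dec eq_dec v Y) as [Hy|]; [destruct (fY v Hy) as [? [? [? ?]]]; contradiction|].
                 destruct (in_dec eq_dec v (fv F1)) as [HF|]; [exfalso; apply Hp; apply Hdisj; assumption|reflexivity].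
        -- apply eval_big_and. intros f Hf.
           destruct (shared_eqs_in Hf) as [p [x [y [Hpx [Hpy ->]]]]]. simpl.
           rewrite (HyP y p) by (apply combine_swap; auto).
           pose proof (in_combine_l _ _ _ _ Hpx) as Hp1.
           pose proof (in_combine_l _ _ _ _ Hpy) as Hp2.
           unfold tau. destruct (in_dec eq_dec x X) as [_|Hn];
             [|exfalso; apply Hn; eapply in_combine_r; eauto].
           rewrite (lookup_pair ndX (combine_swap Hpx)).
           rewrite Hcomp; auto.
        -- rewrite (eval_ext _ rho); auto.
           intros v Hv. destruct (in_dec eq_dec v (places N1)) as [Hp|Hp].
           ++ rewrite HxP, Hrhop; auto.
           ++ rewrite lookup_notin by auto. unfold tau.
              destruct (in_dec eq_dec v X) as [Hx|]; [destruct (fX v Hx) as [? [? [? ?]]]; contradiction|].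
              destruct (in_dec eq_dec v Y) as [Hy|]; [destruct (fY v Hy) as [? [? [? ?]]]; contradiction|].
              destruct (in_dec eq_dec v (fv F1)); [reflexivity|contradiction].
    + exact HyP.
  - intros [m2' [[r2 Hf2] [tau [[tau' [Heq [Hpos Hev]]] Htau]]]].
    cbn [ebound E_transform] in Heq, Hpos.
    unfold E_transform, E_tilde in Hev. cbn [ebody eval] in Hev.
    rewrite !eval_rename in Hev.
    destruct Hev as [[HE Hsh] HF].
    rewrite eval_big_and in Hsh.
    set (m1' := fun v => if in_dec eq_dec v (places N1)
                         then Z.to_nat (tau' (lookup (places N1) X v)) else 0%nat).
    assert (Hm1 : forall p, In p (places N1) ->
      Z.of_nat (m1' p) = tau' (lookup (places N1) X p)).
    { intros p Hp. unfold m1'. destruct (in_dec eq_dec p (places N1)); [|contradiction].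
      rewrite Z2Nat.id; auto. apply Hpos. eapply in_combine_r, lookup_in; eauto. }
    assert (Hy2 : forall p, In p (places N2) ->
      tau' (lookup (places N2) Y p) = Z.of_nat (m2' p)).
    { intros p Hp. pose proof (lookup_in _ _ _ HlY' Hp) as Hc.
      rewrite Heq. apply Htau. apply combine_swap; auto.
      intro Hx. apply (dXY _ Hx). eapply in_combine_r; eauto. }
    assert (Hcomp : compatible (places N2) m2' (places N1) m1').
    { intros p Hp2 Hp1. apply Nat2Z.inj. rewrite Hm1 by auto. rewrite <- Hy2 by auto.
      pose proof (Hsh _ (shared_eqs_mem (lookup_in _ _ _ HlX' Hp1) (lookup_in _ _ _ HlY' Hp2))).
      simpl in H0. auto. }
    assert (Hmk1' : is_marking N1 m1').
    { intros v Hv. unfold m1'. destruct (in_dec eq_dec v (places N1)); [contradiction|auto]. }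
    destruct (A21 r2 m2' Hf2) as [_ Hreach].
    destruct (Hreach m1' Hmk1') as [r1 [Hf1 _]].
    { split; [exact Hcomp|].
      exists (fun v => tau' (lookup (places N2) Y (lookup (places N1) X v))).
      split; [exact HE|].
      intros p Hp. unfold munion.
      destruct (in_dec eq_dec p (places N1)) as [Hp1|Hp1].
      - pose proof (lookup_in _ _ _ HlX' Hp1) as Hc.
        rewrite (lookup_notin (places N2) Y) by (apply fX; eapply in_combine_r; eauto).
        rewrite <- Hm1 by auto.
        destruct (in_dec eq_dec p (places N2)); [rewrite Hcomp|]; auto.
      - rewrite (lookup_notin (places N1) X) by auto.
        apply in_app_or in Hp. destruct Hp as [Hp|Hp]; [|contradiction].
        destruct (in_dec eq_dec p (places N2)); [|contradiction]. auto. }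
    exists m1'. split; [exists r1; exact Hf1|].
    exists (fun v => tau' (lookup (places N1) X v)). split; [exact HF|].
    intros p Hp. rewrite Hm1; auto.
Qed.
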